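(* Let $(X,d)$ be a Cantor space and let $f\in\mathcal{H}(X)$ be equicontinuous. Then $f$ is topologically stable if and only if $f$ has the strict periodic shadowing property.
   Context: A Cantor space is a compact metric space without isolated points that is totally disconnected. $\mathcal{H}(X)$, $d_{C^0}$, $D$: set of homeomorphisms, $d_{C^0}(f,g)=\sup_x d(f(x),g(x))$, $D(f,g)=\max\{d_{C^0}(f,g),d_{C^0}(f^{-1},g^{-1})\}$. Equicontinuous: for every $\epsilon>0$ there is $\delta>0$ with $d(x,y)\le\delta\Rightarrow\sup_{i\in\mathbb{Z}}d(f^i(x),f^i(y))\le\epsilon$. Strict periodic shadowing property: for every $\epsilon>0$ there is $\delta>0$ such that for every $(x_i)_{i=0}^m$, $m\ge1$, with $d(f(x_i),x_{i+1})\le\delta$ and $x_0=x_m$, there is $p$ with $f^m(p)=p$ and $d(x_i,f^i(p))\le\epsilon$ for $0\le i\le m$. Topologically stable: for every $\epsilon>0$ there is $\delta>0$ such that every $g\in\mathcal{H}(X)$ with $D(f,g)<\delta$ admits a continuous $h:X\to X$ with $d_{C^0}(h,\mathrm{id}_X)<\epsilon$ and $h\circ g=f\circ h$. *)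

(* Defs.v *)
From Stdlib Require Import Reals List ZArith.
Open Scope R_scope.

Record is_metric {X : Type} (d : X -> X -> R) : Prop := {
  metric_nonneg : forall x y, 0 <= d x y;
  metric_zero : forall x y, d x y = 0 <-> x = y;
  metric_sym : forall x y, d x y = d y x;
  metric_triangle : forall x y z, d x z <= d x y + d y z
}.

Definition is_open {X : Type} (d : X -> X -> R) (U : X -> Prop) : Prop :=
  forall x, U x -> exists r, 0 < r /\ forall y, d x y < r -> U y.

Definition compact_space {X : Type} (d : X -> X -> R) : Prop :=
  forall (I : Type) (U : I -> X -> Prop),
    (forall i, is_open d (U i)) ->
    (forall x, exists i, U i x) ->
    exists l : list I, forall x, exists i, In i l /\ U i x.

Definition no_isolated_points {X : Type} (d : X -> X -> R) : Prop :=
  forall x eps, 0 < eps -> exists y, y <> x /\ d x y < eps.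

Definition connected_set {X : Type} (d : X -> X -> R) (A : X -> Prop) : Prop :=
  forall U V : X -> Prop, is_open d U -> is_open d V ->
    (forall x, A x -> U x \/ V x) ->
    (forall x, A x -> U x -> V x -> False) ->
    (forall x, A x -> U x) \/ (forall x, A x -> V x).

Definition totally_disconnected {X : Type} (d : X -> X -> R) : Prop :=
  forall A : X -> Prop, connected_set d A -> forall x y, A x -> A y -> x = y.

Definition cantor_space {X : Type} (d : X -> X -> R) : Prop :=
  is_metric d /\ compact_space d /\ no_isolated_points d /\ totally_disconnected d.

Definition continuous_map {X : Type} (d : X -> X -> R) (f : X -> X) : Prop :=
  forall x eps, 0 < eps -> exists delta, 0 < delta /\
    forall y, d x y < delta -> d (f x) (f y) < eps.

Definition is_homeo {X : Type} (d : X -> X -> R) (f finv : X -> X) : Prop :=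
  continuous_map d f /\ continuous_map d finv /\
  (forall x, finv (f x) = x) /\ (forall x, f (finv x) = x).

(* d_{C^0}(f,g) < c, i.e. sup_x d(f x, g x) < c. *)
Definition dC0_lt {X : Type} (d : X -> X -> R) (f g : X -> X) (c : R) : Prop :=
  exists c', c' < c /\ forall x, d (f x) (g x) <= c'.

Definition D_lt {X : Type} (d : X -> X -> R) (f finv g ginv : X -> X) (c : R) : Prop :=
  dC0_lt d f g c /\ dC0_lt d finv ginv c.

Definition iterz {X : Type} (f finv : X -> X) (i : Z) (x : X) : X :=
  match i with
  | Z0 => x
  | Zpos p => Nat.iter (Pos.to_nat p) f x
  | Zneg p => Nat.iter (Pos.to_nat p) finv x
  end.

Definition equicontinuous {X : Type} (d : X -> X -> R) (f finv : X -> X) : Prop :=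
  forall eps, 0 < eps -> exists delta, 0 < delta /\
    forall x y, d x y <= delta ->
      forall i : Z, d (iterz f finv i x) (iterz f finv i y) <= eps.

Definition strict_periodic_shadowing {X : Type} (d : X -> X -> R) (f : X -> X) : Prop :=
  forall eps, 0 < eps -> exists delta, 0 < delta /\
    forall (m : nat) (xs : nat -> X), (1 <= m)%nat ->
      (forall i, (i < m)%nat -> d (f (xs i)) (xs (S i)) <= delta) ->
      xs 0%nat = xs m ->
      exists p, Nat.iter m f p = p /\
        forall i, (i <= m)%nat -> d (xs i) (Nat.iter i f p) <= eps.

Definition topologically_stable {X : Type} (d : X -> X -> R) (f finv : X -> X) : Prop :=
  forall eps, 0 < eps -> exists delta, 0 < delta /\
    forall g ginv : X -> X, is_homeo d g ginv ->
      D_lt d f finv g ginv delta ->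
      exists h : X -> X, continuous_map d h /\
        dC0_lt d h (fun x => x) eps /\
        (forall x, h (g x) = f (h x)).

(* Main.v *)
Require Import Defs.
From Stdlib Require Import Reals List ZArith.
From Stdlib Require Import Lia Lra Classical ClassicalEpsilon FunctionalExtensionality PropExtensionality.
Open Scope R_scope.

Lemma iter_cancel {X} (f finv : X -> X) :
  (forall x, finv (f x) = x) -> forall n x, Nat.iter n finv (Nat.iter n f x) = x.
Proof.
  intros H n; induction n as [|n IH]; intro x; [reflexivity|].
  rewrite Nat.iter_succ_r. simpl. rewrite H. apply IH.
Qed.

Lemma iterz_pos {X} (f finv : X -> X) n x : iterz f finv (Z.of_nat n) x = Nat.iter n f x.
Proof.
  destruct n as [|k]; [reflexivity|].
  simpl. rewrite SuccNat2Pos.id_succ. reflexivity.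
Qed.

Lemma iterz_neg {X} (f finv : X -> X) n x : iterz f finv (- Z.of_nat n) x = Nat.iter n finv x.
Proof.
  destruct n as [|k]; [reflexivity|].
  simpl. rewrite SuccNat2Pos.id_succ. reflexivity.
Qed.

Lemma iter_comm {X} (f : X -> X) n x : Nat.iter n f (f x) = f (Nat.iter n f x).
Proof. rewrite <- Nat.iter_succ_r. reflexivity. Qed.

Lemma ball_open {X} (d : X -> X -> R) (Hm : is_metric d) c r :
  is_open d (fun z => d c z < r).
Proof.
  intros x Hx. exists (r - d c x). split; [lra|].
  intros y Hy. pose proof (metric_triangle d Hm c x y). lra.
Qed.

Lemma d_refl {X} (d : X -> X -> R) (Hm : is_metric d) x : d x x = 0.
Proof. apply (metric_zero d Hm). reflexivity. Qed.

Fixpoint maxl {I} (F : I -> nat) (l : list I) : nat :=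
  match l with nil => 0%nat | i :: l => Nat.max (F i) (maxl F l) end.

Lemma maxl_in {I} (F : I -> nat) l i : In i l -> (F i <= maxl F l)%nat.
Proof.
  induction l as [|j l IH]; simpl; [tauto|]. intros [->|H]; [lia|]. specialize (IH H); lia.
Qed.

Lemma cluster {X} (d : X -> X -> R) (Hm : is_metric d) (Hc : compact_space d)
  (u : nat -> X) : exists w, forall r, 0 < r -> forall N, exists n, (N <= n)%nat /\ d w (u n) < r.
Proof.
  apply NNPP; intro Hn.
  assert (H : forall w, exists p : R * nat, 0 < fst p /\ forall n, (snd p <= n)%nat -> fst p <= d w (u n)).
  { intro w. apply NNPP; intro H1. apply Hn. exists w. intros r Hr N.
    apply NNPP; intro H2. apply H1. exists (r, N). simpl. split; [lra|].
    intros n Hn'. apply Rnot_lt_le. intro H3. apply H2. exists n. auto. }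
  set (I := {w : X & {p : R * nat | 0 < fst p /\ forall n, (snd p <= n)%nat -> fst p <= d w (u n)}}).
  set (U := fun (i : I) z => d (projT1 i) z < fst (proj1_sig (projT2 i))).
  destruct (Hc I U) as [l Hl].
  - intro i. apply ball_open; auto.
  - intro x. destruct (H x) as [p Hp]. exists (existT _ x (exist _ p Hp)). unfold U; simpl.
    rewrite d_refl; tauto.
  - set (N := maxl (fun i : I => snd (proj1_sig (projT2 i))) l).
    destruct (Hl (u N)) as [i [Hi HU]]. unfold U in HU.
    pose proof (maxl_in (fun i : I => snd (proj1_sig (projT2 i))) l _ Hi) as HM.
    clear Hi. destruct i as [w [p [Hp1 Hp2]]]. simpl in HU, HM.
    specialize (Hp2 N HM). lra.
Qed.


Inductive chain {X} (d : X -> X -> R) (l : R) : X -> X -> Prop :=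
| ch_refl x : chain d l x x
| ch_step x y z : d x y < l -> chain d l y z -> chain d l x z.

Lemma chain_trans {X} (d : X -> X -> R) l x y z : chain d l x y -> chain d l y z -> chain d l x z.
Proof. induction 1; auto. intro. econstructor; eauto. Qed.

Lemma chain_snoc {X} (d : X -> X -> R) l x y z : chain d l x y -> d y z < l -> chain d l x z.
Proof. intros H1 H2. eapply chain_trans; eauto. econstructor; eauto. constructor. Qed.

Lemma chain_mono {X} (d : X -> X -> R) l l' x y : l <= l' -> chain d l x y -> chain d l' x y.
Proof. intros Hl; induction 1. constructor. econstructor; eauto. lra. Qed.

Lemma chain_sym {X} (d : X -> X -> R) (Hm : is_metric d) l x y : chain d l x y -> chain d l y x.
Proof. induction 1. constructor. eapply chain_snoc; eauto. rewrite metric_sym; auto. Qed.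

Lemma chain_exit {X} (d : X -> X -> R) l (S : X -> Prop) a b :
  chain d l a b -> S a -> ~ S b ->
  exists u v, chain d l a u /\ S u /\ ~ S v /\ d u v < l.
Proof.
  induction 1 as [x|x y z Hxy Hyz IH]; intros Ha Hb; [tauto|].
  destruct (classic (S y)) as [Hy|Hy].
  - destruct (IH Hy Hb) as [u [v [H1 [H2 [H3 H4]]]]]. exists u, v. repeat split; auto.
    econstructor; eauto.
  - exists x, y. repeat split; auto. constructor.
Qed.

Definition lam (n : nat) : R := / (INR n + 1).

Lemma lam_pos n : 0 < lam n.
Proof. unfold lam. apply Rinv_0_lt_compat. pose proof (pos_INR n). lra. Qed.

Lemma lam_small r : 0 < r -> exists N, lam N < r.
Proof.
  intro Hr. destruct (archimed_cor1 r Hr) as [N [H1 H2]]. exists N. unfold lam.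
  eapply Rle_lt_trans; [|exact H1]. apply Rinv_le_contravar.
  apply lt_0_INR; auto. lra.
Qed.

Lemma lam_anti n m : (n <= m)%nat -> lam m <= lam n.
Proof.
  intro H. unfold lam. apply Rinv_le_contravar. pose proof (pos_INR n); lra.
  apply le_INR in H. lra.
Qed.

Definition Kset {X} (d : X -> X -> R) x : X -> Prop :=
  fun w => forall l, 0 < l -> chain d l x w.

Lemma K_side {X} (d : X -> X -> R) (Hm : is_metric d) (Hc : compact_space d) x
  (U V : X -> Prop) : is_open d U -> is_open d V ->
  (forall z, Kset d x z -> U z \/ V z) ->
  (forall z, Kset d x z -> U z -> V z -> False) ->
  U x -> forall w, Kset d x w -> U w.
Proof.
  intros HU HV Hcov Hdis Hx w0 Kw0. apply NNPP; intro nU.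
  assert (HV0 : V w0) by (destruct (Hcov w0 Kw0); tauto).
  set (U' := fun z => exists w r, Kset d x w /\ U w /\ 0 < r /\ (forall y, d w y < 2*r -> U y) /\ d w z < r).
  set (V' := fun z => exists w r, Kset d x w /\ V w /\ 0 < r /\ (forall y, d w y < 2*r -> V y) /\ d w z < r).
  assert (Hdisj : forall z, U' z -> V' z -> False).
  { intros z [w [r [Kw [Uw [Hr [Hb Hz]]]]]] [w' [r' [Kw' [Vw' [Hr' [Hb' Hz']]]]]].
    pose proof (metric_triangle d Hm w z w'). pose proof (metric_sym d Hm z w').
    pose proof (metric_triangle d Hm w' z w). pose proof (metric_sym d Hm z w).
    destruct (Rle_lt_dec r' r).
    - apply (Hdis w' Kw'); auto. apply Hb. lra.
    - apply (Hdis w Kw); auto. apply Hb'. lra. }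
  assert (HUp : forall z, Kset d x z -> U z -> U' z).
  { intros z Kz Uz. destruct (HU z Uz) as [r0 [Hr0 Hb]]. exists z, (r0/2).
    rewrite d_refl; auto. repeat split; auto; try lra. intros y Hy; apply Hb; lra. }
  assert (HVp : forall z, Kset d x z -> V z -> V' z).
  { intros z Kz Vz. destruct (HV z Vz) as [r0 [Hr0 Hb]]. exists z, (r0/2).
    rewrite d_refl; auto. repeat split; auto; try lra. intros y Hy; apply Hb; lra. }
  assert (HU'o : is_open d U').
  { intros z [w [r [Kw [Uw [Hr [Hb Hz]]]]]]. exists (r - d w z). split; [lra|].
    intros y Hy. exists w, r. repeat split; auto. pose proof (metric_triangle d Hm w z y). lra. }
  assert (HV'o : is_open d V').
  { intros z [w [r [Kw [Uw [Hr [Hb Hz]]]]]]. exists (r - d w z). split; [lra|].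
    intros y Hy. exists w, r. repeat split; auto. pose proof (metric_triangle d Hm w z y). lra. }
  assert (Kx : Kset d x x) by (intros l Hl; constructor).
  assert (Hseq : forall n, exists p : X * X, chain d (lam n) x (fst p) /\ U' (fst p) /\ ~ U' (snd p) /\ d (fst p) (snd p) < lam n).
  { intro n. destruct (chain_exit d (lam n) U' x w0) as [u [v H]].
    - apply Kw0, lam_pos.
    - apply HUp; auto.
    - intro H. apply (Hdisj w0); auto.
    - exists (u, v); exact H. }
  set (pu := fun n => proj1_sig (constructive_indefinite_description _ (Hseq n))).
  assert (Hpu : forall n, chain d (lam n) x (fst (pu n)) /\ U' (fst (pu n)) /\ ~ U' (snd (pu n)) /\ d (fst (pu n)) (snd (pu n)) < lam n).
  { intro n. exact (proj2_sig (constructive_indefinite_description _ (Hseq n))). }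
  destruct (cluster d Hm Hc (fun n => fst (pu n))) as [w Hw].
  assert (Kw : Kset d x w).
  { intros l Hl. destruct (lam_small (l/2)) as [N HN]; [lra|].
    destruct (Hw (l/2) ltac:(lra) N) as [n [Hn Hd]].
    destruct (Hpu n) as [H1 _]. pose proof (lam_anti N n Hn).
    eapply chain_snoc. eapply chain_mono; [|exact H1]. lra.
    rewrite metric_sym; auto. lra. }
  destruct (Hcov w Kw) as [Uw|Vw].
  - destruct (HU'o w (HUp w Kw Uw)) as [r [Hr Hb]].
    destruct (lam_small (r/2)) as [N HN]; [lra|].
    destruct (Hw (r/2) ltac:(lra) N) as [n [Hn Hd]].
    destruct (Hpu n) as [_ [_ [H3 H4]]]. pose proof (lam_anti N n Hn).
    apply H3, Hb. pose proof (metric_triangle d Hm w (fst (pu n)) (snd (pu n))). lra.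
  - destruct (HV'o w (HVp w Kw Vw)) as [r [Hr Hb]].
    destruct (Hw r Hr 0%nat) as [n [Hn Hd]].
    destruct (Hpu n) as [_ [H2 _]]. apply (Hdisj (fst (pu n))); auto.
Qed.

Lemma K_connected {X} (d : X -> X -> R) (Hm : is_metric d) (Hc : compact_space d) x :
  connected_set d (Kset d x).
Proof.
  intros U V HU HV Hcov Hdis.
  assert (Kx : Kset d x x) by (intros l Hl; constructor).
  destruct (Hcov x Kx) as [Ux|Vx].
  - left. eapply K_side; eauto.
  - right. eapply (K_side d Hm Hc x V U); eauto.
    intros z Kz; destruct (Hcov z Kz); tauto.
Qed.

Lemma small_chain {X} (d : X -> X -> R) (Hm : is_metric d) (Hc : compact_space d)
  (Htd : totally_disconnected d) eps : 0 < eps ->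
  exists l, 0 < l /\ forall x y, chain d l x y -> d x y < eps.
Proof.
  intro He. apply NNPP; intro Hn.
  assert (Hs : forall n, exists p : X * X, chain d (lam n) (fst p) (snd p) /\ eps <= d (fst p) (snd p)).
  { intro n. apply NNPP; intro H1. apply Hn. exists (lam n). split; [apply lam_pos|].
    intros x y Hxy. apply Rnot_le_lt. intro H2. apply H1. exists (x, y); simpl; auto. }
  set (pu := fun n => proj1_sig (constructive_indefinite_description _ (Hs n))).
  assert (Hpu : forall n, chain d (lam n) (fst (pu n)) (snd (pu n)) /\ eps <= d (fst (pu n)) (snd (pu n))).
  { intro n. exact (proj2_sig (constructive_indefinite_description _ (Hs n))). }
  destruct (cluster d Hm Hc (fun n => fst (pu n))) as [xs Hxs].
  assert (Hz : forall n, exists z, chain d (lam n) xs z /\ eps/2 <= d xs z).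
  { intro n. destruct (Hxs (Rmin (lam n) (eps/2)) ltac:(apply Rmin_pos; [apply lam_pos|lra]) n)
      as [m [Hm' Hd]].
    pose proof (Rmin_l (lam n) (eps/2)). pose proof (Rmin_r (lam n) (eps/2)).
    destruct (Hpu m) as [H1 H2]. exists (snd (pu m)). split.
    - apply ch_step with (y := fst (pu m)). lra.
      eapply chain_mono; [apply lam_anti; exact Hm'|exact H1].
    - pose proof (metric_triangle d Hm (fst (pu m)) xs (snd (pu m))).
      pose proof (metric_sym d Hm xs (fst (pu m))). lra. }
  set (zu := fun n => proj1_sig (constructive_indefinite_description _ (Hz n))).
  assert (Hzu : forall n, chain d (lam n) xs (zu n) /\ eps/2 <= d xs (zu n)).
  { intro n. exact (proj2_sig (constructive_indefinite_description _ (Hz n))). }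
  destruct (cluster d Hm Hc zu) as [zs Hzs].
  assert (Kz : Kset d xs zs).
  { intros l Hl. destruct (lam_small (l/2)) as [N HN]; [lra|].
    destruct (Hzs (l/2) ltac:(lra) N) as [n [Hn' Hd]].
    destruct (Hzu n) as [H1 _]. pose proof (lam_anti N n Hn').
    eapply chain_snoc. eapply chain_mono; [|exact H1]. lra.
    rewrite metric_sym; auto. lra. }
  assert (Kx : Kset d xs xs) by (intros l Hl; constructor).
  pose proof (Htd (Kset d xs) (K_connected d Hm Hc xs) xs zs Kx Kz) as Heq.
  subst zs. destruct (Hzs (eps/2) ltac:(lra) 0%nat) as [n [_ Hd]].
  destruct (Hzu n) as [_ H2]. lra.
Qed.


Record part {X} (d : X -> X -> R) (f : X -> X) (eps dl : R) (Rl : X -> X -> Prop) : Prop := {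
  p_delta : 0 < dl;
  p_refl : forall x, Rl x x;
  p_sym : forall x y, Rl x y -> Rl y x;
  p_trans : forall x y z, Rl x y -> Rl y z -> Rl x z;
  p_small : forall x y, Rl x y -> d x y < eps;
  p_close : forall x y, d x y <= dl -> Rl x y;
  p_f : forall x y, Rl x y -> Rl (f x) (f y)
}.

Lemma mkpart {X} (d : X -> X -> R) (f finv : X -> X) (Hm : is_metric d) (Hc : compact_space d)
  (Htd : totally_disconnected d) (Heq : equicontinuous d f finv) eps : 0 < eps ->
  exists dl Rl, part d f eps dl Rl.
Proof.
  intro He. destruct (small_chain d Hm Hc Htd eps He) as [l [Hl Hch]].
  destruct (Heq (l/2) ltac:(lra)) as [dl [Hdl Hdel]].
  exists dl, (fun x y => forall n, chain d l (Nat.iter n f x) (Nat.iter n f y)).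
  constructor; auto.
  - intros x n; constructor.
  - intros x y H n; apply chain_sym; auto.
  - intros x y z H1 H2 n; eapply chain_trans; eauto.
  - intros x y H. apply (Hch x y (H 0%nat)).
  - intros x y H n. specialize (Hdel x y H (Z.of_nat n)). rewrite !iterz_pos in Hdel.
    econstructor; [|constructor]. lra.
  - intros x y H n. rewrite <- !Nat.iter_succ_r. apply H.
Qed.

Lemma R_iter {X} d (f : X -> X) eps dl Rl (P : part d f eps dl Rl) n x y :
  Rl x y -> Rl (Nat.iter n f x) (Nat.iter n f y).
Proof. intro H; induction n; simpl; auto. apply (p_f _ _ _ _ _ P); auto. Qed.

Lemma R_mult {X} d (f : X -> X) eps dl Rl (P : part d f eps dl Rl) L a :
  Rl (Nat.iter L f a) a -> forall q r, Rl (Nat.iter (q*L + r) f a) (Nat.iter r f a).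
Proof.
  intros H q; induction q as [|q IH]; intro r.
  - simpl. apply (p_refl _ _ _ _ _ P).
  - replace (S q * L + r)%nat with ((q*L + r) + L)%nat by lia.
    rewrite Nat.iter_add. eapply (p_trans _ _ _ _ _ P); [|apply IH].
    apply (R_iter d f eps dl Rl P); auto.
Qed.

Lemma min_exists (P : nat -> Prop) : (exists n, P n) -> exists n, P n /\ forall k, (k < n)%nat -> ~ P k.
Proof.
  intros [n Hn]. induction n as [n IH] using (well_founded_induction lt_wf).
  destruct (classic (exists k, (k < n)%nat /\ P k)) as [[k [Hk Pk]]|Hno].
  - exact (IH k Hk Pk).
  - exists n. split; auto. intros k Hk Pk. apply Hno; eauto.
Qed.

Lemma recurrence {X} (d : X -> X -> R) (f finv : X -> X) (Hm : is_metric d) (Hc : compact_space d)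
  (Hinv : forall x, finv (f x) = x) (Heq : equicontinuous d f finv) eps dl Rl (P : part d f eps dl Rl) :
  forall y, exists L, (1 <= L)%nat /\ Rl (Nat.iter L f y) y.
Proof.
  intro y. destruct (Heq dl (p_delta _ _ _ _ _ P)) as [d1 [Hd1 Hdel]].
  destruct (cluster d Hm Hc (fun n => Nat.iter n f y)) as [w Hw].
  destruct (Hw (d1/2) ltac:(lra) 0%nat) as [n [_ Hn]].
  destruct (Hw (d1/2) ltac:(lra) (S n)) as [m [Hmn Hm']].
  exists (m - n)%nat. split; [lia|].
  assert (Hd : d (Nat.iter n f y) (Nat.iter m f y) <= d1).
  { pose proof (metric_triangle d Hm (Nat.iter n f y) w (Nat.iter m f y)).
    pose proof (metric_sym d Hm w (Nat.iter n f y)). simpl in *. lra. }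
  specialize (Hdel _ _ Hd (- Z.of_nat n)%Z). rewrite !iterz_neg in Hdel.
  replace m with (n + (m - n))%nat in Hdel by lia. rewrite Nat.iter_add in Hdel.
  rewrite !iter_cancel in Hdel by auto.
  apply (p_sym _ _ _ _ _ P). apply (p_close _ _ _ _ _ P). exact Hdel.
Qed.


Lemma spsp_ts {X} (d : X -> X -> R) (f finv : X -> X) :
  cantor_space d -> is_homeo d f finv -> equicontinuous d f finv ->
  strict_periodic_shadowing d f -> topologically_stable d f finv.
Proof.
  intros [Hm [Hc [Hni Htd]]] [Hfc [Hfic [Hinv1 Hinv2]]] Heq Hs eps He.
  set (eta := eps/4).
  destruct (Hs eta ltac:(unfold eta; lra)) as [dS [HdS Hsh]].
  set (e0 := Rmin dS (eps/4)).
  assert (He0 : 0 < e0) by (apply Rmin_pos; lra).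
  assert (He0a : e0 <= dS) by apply Rmin_l.
  assert (He0b : e0 <= eps/4) by apply Rmin_r.
  destruct (mkpart d f finv Hm Hc Htd Heq e0 He0) as [dl [Rl P]].
  pose proof (p_refl _ _ _ _ _ P) as Rrefl. pose proof (p_sym _ _ _ _ _ P) as Rsym.
  pose proof (p_trans _ _ _ _ _ P) as Rtrans. pose proof (p_small _ _ _ _ _ P) as Rsmall.
  pose proof (p_close _ _ _ _ _ P) as Rclose. pose proof (R_iter _ _ _ _ _ P) as Riter.
  pose proof (recurrence d f finv Hm Hc Hinv1 Heq _ _ _ P) as Hrec.
  assert (Q : forall a L, (1 <= L)%nat -> Rl (Nat.iter L f a) a ->
            exists p, Nat.iter L f p = p /\ forall i, (i < L)%nat -> d (Nat.iter i f a) (Nat.iter i f p) <= eta).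
  { intros a L HL HR.
    set (xs := fun i => if (i <? L)%nat then Nat.iter i f a else a).
    destruct (Hsh L xs HL) as [p [Hp1 Hp2]].
    - intros i Hi. unfold xs. assert (Hi' : (i <? L)%nat = true) by (apply Nat.ltb_lt; auto).
      rewrite Hi'. destruct (S i <? L)%nat eqn:E.
      + simpl. rewrite d_refl; auto. lra.
      + apply Nat.ltb_ge in E. assert (S i = L) by lia. subst L.
        specialize (Rsmall _ _ HR). simpl in Rsmall. lra.
    - unfold xs. rewrite Nat.ltb_irrefl. destruct (0 <? L)%nat eqn:E; reflexivity.
    - exists p. split; auto. intros i Hi. specialize (Hp2 i ltac:(lia)). unfold xs in Hp2.
      assert (Hi' : (i <? L)%nat = true) by (apply Nat.ltb_lt; auto). rewrite Hi' in Hp2. exact Hp2. }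
  set (Cyc := fun y z => exists n, Rl z (Nat.iter n f y)).
  assert (Cyc_eq : forall y y', Rl y y' -> Cyc y = Cyc y').
  { intros y y' H. apply functional_extensionality; intro z. apply propositional_extensionality.
    unfold Cyc; split; intros [n Hn]; exists n; eapply Rtrans; eauto. }
  assert (Cyc_f : forall y, Cyc (f y) = Cyc y).
  { intro y. apply functional_extensionality; intro z. apply propositional_extensionality.
    unfold Cyc; split; intros [n Hn].
    - exists (S n). rewrite Nat.iter_succ_r. exact Hn.
    - destruct (Hrec y) as [L [HL HR]]. exists (n + L - 1)%nat.
      rewrite <- Nat.iter_succ_r. replace (S (n + L - 1)) with (n + L)%nat by lia.
      rewrite Nat.iter_add. eapply Rtrans; [exact Hn|]. apply Rsym, Riter, HR. }
  set (A := fun y => epsilon (inhabits y) (Cyc y)).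
  assert (A_eq : forall y y', Rl y y' -> A y = A y').
  { intros y y' H. unfold A. rewrite (Cyc_eq y y' H). apply epsilon_inh_irrelevance.
    exists y'. exists 0%nat. apply Rrefl. }
  assert (A_f : forall y, A (f y) = A y).
  { intro y. unfold A. rewrite Cyc_f. apply epsilon_inh_irrelevance. exists y. exists 0%nat. apply Rrefl. }
  assert (A_in : forall y, exists k, Rl y (Nat.iter k f (A y))).
  { intro y. assert (HA : Cyc y (A y)).
    { unfold A. apply epsilon_spec. exists y, 0%nat. apply Rrefl. }
    destruct HA as [n Hn]. destruct (Hrec y) as [L [HL HR]].
    exists (n * L - n)%nat. apply Rsym. eapply Rtrans. apply Riter, Hn.
    rewrite <- Nat.iter_add. replace (n * L - n + n)%nat with (n * L + 0)%nat by nia.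
    apply (R_mult _ _ _ _ _ P); auto. }
  set (minL := fun a L => (1 <= L)%nat /\ Rl (Nat.iter L f a) a /\
                 forall k, (1 <= k)%nat -> (k < L)%nat -> ~ Rl (Nat.iter k f a) a).
  assert (minL_ex : forall a, exists L, minL a L).
  { intro a. destruct (min_exists (fun n => (1 <= n)%nat /\ Rl (Nat.iter n f a) a)) as [L [[H1 H2] H3]].
    - destruct (Hrec a) as [L HL]. eauto.
    - exists L. repeat split; auto. intros k Hk1 Hk2 Hk. apply (H3 k Hk2). auto. }
  set (Lm := fun a => epsilon (inhabits 0%nat) (minL a)).
  assert (Lm_spec : forall a, minL a (Lm a)) by (intro a; apply epsilon_spec, minL_ex).
  assert (uniq : forall a r r', (r < Lm a)%nat -> (r' < Lm a)%nat -> Rl (Nat.iter r f a) (Nat.iter r' f a) -> r = r').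
  { intros a.
    assert (H : forall r r', (r < r')%nat -> (r' < Lm a)%nat -> Rl (Nat.iter r f a) (Nat.iter r' f a) -> False).
    { intros r r' H1 H2 H3. destruct (Lm_spec a) as [HL1 [HL2 HL3]].
      apply (HL3 (Lm a - r' + r)%nat); try lia.
      eapply Rtrans; [|exact HL2]. rewrite Nat.iter_add.
      assert (E : Nat.iter (Lm a) f a = Nat.iter (Lm a - r') f (Nat.iter r' f a))
        by (rewrite <- Nat.iter_add; f_equal; lia).
      rewrite E. apply Riter; auto. }
    intros r r' H1 H2 H3. destruct (Nat.lt_trichotomy r r') as [Hl|[He'|Hl]]; auto.
    - exfalso; eapply H; eauto.
    - exfalso; eapply H; eauto. }
  assert (reduce : forall a k y, Rl y (Nat.iter k f a) -> exists r, (r < Lm a)%nat /\ Rl y (Nat.iter r f a)).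
  { intros a k y H. destruct (Lm_spec a) as [HL1 [HL2 _]].
    exists (k mod Lm a)%nat. split. apply Nat.mod_upper_bound; lia.
    eapply Rtrans; [exact H|].
    assert (E : k = (k / Lm a * Lm a + k mod Lm a)%nat)
      by (rewrite Nat.mul_comm; apply Nat.div_mod; lia).
    replace (Nat.iter k f a) with (Nat.iter (k / Lm a * Lm a + k mod Lm a) f a)
      by (f_equal; congruence).
    apply (R_mult _ _ _ _ _ P); auto. }
  set (pp := fun a => epsilon (inhabits a) (fun p => Nat.iter (Lm a) f p = p /\
              forall i, (i < Lm a)%nat -> d (Nat.iter i f a) (Nat.iter i f p) <= eta)).
  assert (pp_spec : forall a, Nat.iter (Lm a) f (pp a) = pp a /\
              forall i, (i < Lm a)%nat -> d (Nat.iter i f a) (Nat.iter i f (pp a)) <= eta).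
  { intro a. destruct (Lm_spec a) as [HL1 [HL2 _]].
    exact (epsilon_spec (inhabits a) _ (Q a (Lm a) HL1 HL2)). }
  set (jj := fun y => epsilon (inhabits 0%nat) (fun r => (r < Lm (A y))%nat /\ Rl y (Nat.iter r f (A y)))).
  assert (jj_spec : forall y, (jj y < Lm (A y))%nat /\ Rl y (Nat.iter (jj y) f (A y))).
  { intro y. destruct (A_in y) as [k Hk].
    exact (epsilon_spec (inhabits 0%nat) _ (reduce _ _ _ Hk)). }
  assert (jj_unique : forall y r, (r < Lm (A y))%nat -> Rl y (Nat.iter r f (A y)) -> jj y = r).
  { intros y r H1 H2. destruct (jj_spec y) as [H3 H4]. apply (uniq (A y)); auto.
    eapply Rtrans; [apply Rsym; exact H4|exact H2]. }
  set (h := fun y => Nat.iter (jj y) f (pp (A y))).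
  assert (h_eq : forall y y', Rl y y' -> h y = h y').
  { intros y y' H. unfold h. rewrite (A_eq y y' H). f_equal. symmetry.
    destruct (jj_spec y) as [H1 H2]. rewrite (A_eq y y' H) in H1, H2.
    apply jj_unique; auto. eapply Rtrans; [apply Rsym; exact H|exact H2]. }
  assert (h_f : forall y, h (f y) = f (h y)).
  { intro y. unfold h. rewrite A_f. destruct (jj_spec y) as [H1 H2].
    destruct (Lm_spec (A y)) as [HL1 [HL2 _]].
    destruct (Nat.eq_dec (S (jj y)) (Lm (A y))) as [E|E].
    - assert (jj (f y) = 0%nat).
      { apply jj_unique; rewrite A_f. lia. simpl. eapply Rtrans. apply (p_f _ _ _ _ _ P), H2.
        rewrite <- iter_comm, <- Nat.iter_succ_r, E. exact HL2. }
      rewrite H. simpl. rewrite <- (proj1 (pp_spec (A y))) at 1. rewrite <- E. reflexivity.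
    - assert (jj (f y) = S (jj y)).
      { apply jj_unique; rewrite A_f. lia. simpl. apply (p_f _ _ _ _ _ P), H2. }
      rewrite H. reflexivity. }
  assert (h_close : forall y, d (h y) y <= eta + e0).
  { intro y. unfold h. destruct (jj_spec y) as [H1 H2].
    pose proof (proj2 (pp_spec (A y)) _ H1). pose proof (Rsmall _ _ H2).
    pose proof (metric_triangle d Hm (Nat.iter (jj y) f (pp (A y))) (Nat.iter (jj y) f (A y)) y).
    rewrite (metric_sym d Hm _ (Nat.iter (jj y) f (A y))) in H3.
    rewrite (metric_sym d Hm (Nat.iter (jj y) f (A y)) y) in H3. lra. }
  exists dl. split; [exact (p_delta _ _ _ _ _ P)|].
  intros g ginv Hg [[c' [Hc' Hfg]] _].
  exists h. split; [|split].
  - intros x e He'. exists dl. split; [exact (p_delta _ _ _ _ _ P)|].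
    intros y Hy. rewrite (h_eq x y). rewrite d_refl; auto. apply Rclose; lra.
  - exists (eta + e0). split; [unfold eta; lra|]. intro x. apply h_close.
  - intro x. rewrite <- h_f. apply h_eq. apply Rclose. specialize (Hfg x).
    rewrite metric_sym; auto. lra.
Qed.


Lemma cont_comp {X} (d : X -> X -> R) (f g : X -> X) :
  continuous_map d f -> continuous_map d g -> continuous_map d (fun x => g (f x)).
Proof.
  intros Hf Hg x e He. destruct (Hg (f x) e He) as [r1 [Hr1 H1]].
  destruct (Hf x r1 Hr1) as [r2 [Hr2 H2]]. exists r2; split; auto.
Qed.

Lemma cont_iter {X} (d : X -> X -> R) (Hm : is_metric d) (f : X -> X) n :
  continuous_map d f -> continuous_map d (Nat.iter n f).
Proof.
  intro Hf. induction n as [|n IH]; simpl.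
  - intros x e He. exists e; split; auto.
  - apply (cont_comp d (Nat.iter n f) f); auto.
Qed.

Lemma iter_period {X} (f : X -> X) L p : Nat.iter L f p = p -> forall q r, Nat.iter (q*L + r) f p = Nat.iter r f p.
Proof.
  intros H q; induction q as [|q IH]; intro r; simpl; auto.
  replace (L + q * L + r)%nat with ((q*L + r) + L)%nat by lia. rewrite Nat.iter_add, H. auto.
Qed.

Lemma ts_Q {X} (d : X -> X -> R) (f finv : X -> X) (Hm : is_metric d) (Hc : compact_space d)
  (Htd : totally_disconnected d) (Hh : is_homeo d f finv) (Heq : equicontinuous d f finv)
  eta dT (Heta : 0 < eta)
  (HTd : forall g ginv : X -> X, is_homeo d g ginv -> D_lt d f finv g ginv dT ->
      exists h : X -> X, continuous_map d h /\ dC0_lt d h (fun x => x) eta /\ (forall x, h (g x) = f (h x)))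
  de (Hdel : forall x y, d x y <= de -> forall i, d (iterz f finv i x) (iterz f finv i y) <= dT/2)
  e0 dl Rl (P : part d f e0 dl Rl) (He0 : e0 <= de) (He0' : e0 < dT) :
  forall a L, (1 <= L)%nat -> Rl (Nat.iter L f a) a ->
    (forall k, (1 <= k)%nat -> (k < L)%nat -> ~ Rl (Nat.iter k f a) a) ->
    exists p, Nat.iter L f p = p /\ forall i, (i < L)%nat -> d (Nat.iter i f a) (Nat.iter i f p) < eta.
Proof.
  destruct Hh as [Hfc [Hfic [Hinv1 Hinv2]]].
  pose proof (p_refl _ _ _ _ _ P) as Rrefl. pose proof (p_sym _ _ _ _ _ P) as Rsym.
  pose proof (p_trans _ _ _ _ _ P) as Rtrans. pose proof (p_small _ _ _ _ _ P) as Rsmall.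
  pose proof (p_close _ _ _ _ _ P) as Rclose. pose proof (R_iter _ _ _ _ _ P) as Riter.
  pose proof (p_delta _ _ _ _ _ P) as Hdl.
  intros a L HL HR Hmin.
  assert (He0p : 0 < e0) by (pose proof (Rsmall a a (Rrefl a)) as H0; rewrite d_refl in H0; auto).
  destruct (classic (Nat.iter L f a = a)) as [Hfix|Hnfix].
  { exists a. split; auto. intros i Hi. rewrite d_refl; auto. }
  set (D := d a (Nat.iter L f a)).
  assert (HD : 0 < D).
  { pose proof (metric_nonneg d Hm a (Nat.iter L f a)). destruct (Rle_lt_or_eq_dec 0 D); auto.
    exfalso. apply Hnfix. symmetry. apply (metric_zero d Hm). unfold D in e. auto. }
  set (rho := Rmin dl (D/3)).
  assert (Hrho : 0 < rho) by (apply Rmin_pos; lra).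
  assert (Hrho1 : rho <= dl) by apply Rmin_l. assert (Hrho2 : rho <= D/3) by apply Rmin_r.
  destruct (Heq rho Hrho) as [d2 [Hd2 Hdel2]].
  set (e1 := Rmin d2 rho).
  assert (He1 : 0 < e1) by (apply Rmin_pos; lra).
  assert (He1a : e1 <= d2) by apply Rmin_l. assert (He1b : e1 <= rho) by apply Rmin_r.
  destruct (mkpart d f finv Hm Hc Htd Heq e1 He1) as [dl1 [R1 P1]].
  pose proof (p_refl _ _ _ _ _ P1) as R1refl. pose proof (p_sym _ _ _ _ _ P1) as R1sym.
  pose proof (p_trans _ _ _ _ _ P1) as R1trans. pose proof (p_small _ _ _ _ _ P1) as R1small.
  pose proof (p_close _ _ _ _ _ P1) as R1close. pose proof (p_delta _ _ _ _ _ P1) as Hdl1.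
  set (W := fun z => R1 z a).
  set (FL := Nat.iter L f). set (GL := Nat.iter L finv).
  assert (FG : forall z, FL (GL z) = z) by (intro z; apply (iter_cancel finv f); auto).
  assert (GF : forall z, GL (FL z) = z) by (intro z; apply (iter_cancel f finv); auto).
  set (M2 := fun z => W (GL z)).
  assert (W_da : forall z, W z -> d a z < D/3).
  { intros z Hz. pose proof (R1small _ _ Hz). rewrite metric_sym; auto. lra. }
  assert (W_R : forall z, W z -> Rl z a).
  { intros z Hz. apply Rclose. pose proof (R1small _ _ Hz). lra. }
  assert (W_FL : forall z, W z -> d (FL a) (FL z) <= rho).
  { intros z Hz. pose proof (R1small _ _ Hz). specialize (Hdel2 a z ltac:(rewrite metric_sym; auto; lra) (Z.of_nat L)).
    rewrite !iterz_pos in Hdel2. exact Hdel2. }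
  assert (W_RF : forall z, W z -> Rl (FL z) a).
  { intros z Hz. eapply Rtrans; [|exact HR]. apply Rsym, Rclose. pose proof (W_FL z Hz). unfold FL in *. lra. }
  assert (M2_R : forall z, M2 z -> Rl z a).
  { intros z Hz. rewrite <- (FG z). apply W_RF, Hz. }
  assert (disj : forall z, W z -> M2 z -> False).
  { intros z Hz Hz2. pose proof (W_da z Hz). pose proof (W_FL _ Hz2). rewrite FG in H0.
    pose proof (metric_triangle d Hm a z (FL a)). rewrite (metric_sym d Hm z (FL a)) in H1.
    unfold D, FL in *. lra. }
  assert (W_lc : forall z y, d z y <= dl1 -> (W y <-> W z)).
  { intros z y H. unfold W. pose proof (R1close _ _ H). split; intro H1.
    - eapply R1trans; eauto. - eapply R1trans; [apply R1sym; eauto|eauto]. }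
  assert (M2_lc : forall z, exists r, 0 < r /\ forall y, d z y < r -> (M2 y <-> M2 z)).
  { intro z. destruct (cont_iter d Hm finv L Hfic z dl1 Hdl1) as [r [Hr Hb]].
    exists r. split; auto. intros y Hy. unfold M2. apply W_lc. left. apply Hb, Hy. }
  set (tau := fun z => if excluded_middle_informative (W z) then FL z
                       else if excluded_middle_informative (M2 z) then GL z else z).
  assert (tau_R : forall z, Rl (tau z) z).
  { intro z. unfold tau. destruct (excluded_middle_informative (W z)) as [H1|H1].
    - eapply Rtrans. apply W_RF, H1. apply Rsym, W_R, H1.
    - destruct (excluded_middle_informative (M2 z)) as [H2|H2]; auto.
      eapply Rtrans. apply W_R, H2. apply Rsym, M2_R, H2. }
  assert (tau_inv : forall z, tau (tau z) = z).
  { intro z. unfold tau at 2. destruct (excluded_middle_informative (W z)) as [H1|H1].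
    - unfold tau. assert (H2 : M2 (FL z)) by (unfold M2; rewrite GF; auto).
      destruct (excluded_middle_informative (W (FL z))) as [H3|H3].
      + exfalso; eapply disj; eauto.
      + destruct (excluded_middle_informative (M2 (FL z))); [apply GF|tauto].
    - destruct (excluded_middle_informative (M2 z)) as [H2|H2].
      + unfold tau. destruct (excluded_middle_informative (W (GL z))) as [H3|H3]; [apply FG|tauto].
      + unfold tau. destruct (excluded_middle_informative (W z)); [tauto|].
        destruct (excluded_middle_informative (M2 z)); tauto. }
  assert (tau_cont : continuous_map d tau).
  { intros z e He. destruct (M2_lc z) as [r2 [Hr2 Hb2]].
    destruct (classic (W z)) as [H1|H1].
    - destruct (cont_iter d Hm f L Hfc z e He) as [r [Hr Hb]].
      exists (Rmin r dl1). split; [apply Rmin_pos; auto|]. intros y Hy.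
      pose proof (Rmin_l r dl1). pose proof (Rmin_r r dl1).
      assert (W y) by (apply (W_lc z y); [lra|auto]).
      unfold tau. destruct (excluded_middle_informative (W z)); [|tauto].
      destruct (excluded_middle_informative (W y)); [|tauto]. apply Hb; lra.
    - destruct (classic (M2 z)) as [H2|H2].
      + destruct (cont_iter d Hm finv L Hfic z e He) as [r [Hr Hb]].
        exists (Rmin r (Rmin dl1 r2)). split; [repeat apply Rmin_pos; auto|]. intros y Hy.
        pose proof (Rmin_l r (Rmin dl1 r2)). pose proof (Rmin_r r (Rmin dl1 r2)).
        pose proof (Rmin_l dl1 r2). pose proof (Rmin_r dl1 r2).
        assert (~ W y) by (rewrite (W_lc z y); [auto|lra]).
        assert (M2 y) by (apply (Hb2 y); [lra|auto]).
        unfold tau. destruct (excluded_middle_informative (W z)); [tauto|].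
        destruct (excluded_middle_informative (W y)); [tauto|].
        destruct (excluded_middle_informative (M2 z)); [|tauto].
        destruct (excluded_middle_informative (M2 y)); [|tauto]. apply Hb; lra.
      + exists (Rmin e (Rmin dl1 r2)). split; [repeat apply Rmin_pos; auto|]. intros y Hy.
        pose proof (Rmin_l e (Rmin dl1 r2)). pose proof (Rmin_r e (Rmin dl1 r2)).
        pose proof (Rmin_l dl1 r2). pose proof (Rmin_r dl1 r2).
        assert (~ W y) by (rewrite (W_lc z y); [auto|lra]).
        assert (~ M2 y) by (rewrite (Hb2 y); [auto|lra]).
        unfold tau. destruct (excluded_middle_informative (W z)); [tauto|].
        destruct (excluded_middle_informative (W y)); [tauto|].
        destruct (excluded_middle_informative (M2 z)); [tauto|].
        destruct (excluded_middle_informative (M2 y)); [tauto|]. lra. }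
  set (g := fun z => tau (f z)). set (ginv := fun z => finv (tau z)).
  assert (Hg : is_homeo d g ginv).
  { split; [|split; [|split]].
    - exact (cont_comp d f tau Hfc tau_cont).
    - exact (cont_comp d tau finv tau_cont Hfic).
    - intro x. unfold g, ginv. rewrite tau_inv. auto.
    - intro x. unfold g, ginv. rewrite Hinv2. auto. }
  assert (HD' : D_lt d f finv g ginv dT).
  { split.
    - exists e0. split; auto. intro x. unfold g. left. apply Rsmall. apply Rsym, tau_R.
    - exists (dT/2). split; [lra|]. intro x. unfold ginv.
      assert (Hx : d x (tau x) <= de) by (left; eapply Rlt_le_trans; [apply Rsmall, Rsym, tau_R|auto]).
      specialize (Hdel x (tau x) Hx (- Z.of_nat 1)%Z). rewrite !iterz_neg in Hdel. exact Hdel. }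
  destruct (HTd g ginv Hg HD') as [h [_ [[ch [Hch Hh]] Hcomm]]].
  assert (g_orb : forall i, (i < L)%nat -> Nat.iter i g a = Nat.iter i f a).
  { induction i as [|i IH]; intro Hi; [reflexivity|].
    simpl. rewrite IH by lia. unfold g. rewrite <- (iter_comm f i a), <- Nat.iter_succ_r.
    set (w := Nat.iter (S i) f a).
    assert (~ W w) by (intro H9; apply (Hmin (S i)); [lia|auto|apply W_R, H9]).
    assert (~ M2 w) by (intro H9; apply (Hmin (S i)); [lia|auto|apply M2_R, H9]).
    unfold tau. destruct (excluded_middle_informative (W w)); [tauto|].
    destruct (excluded_middle_informative (M2 w)); [tauto|]. reflexivity. }
  assert (g_per : Nat.iter L g a = a).
  { destruct L as [|L']; [lia|]. simpl. rewrite g_orb by lia. unfold g.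
    rewrite <- (iter_comm f L' a), <- Nat.iter_succ_r. fold (FL a).
    assert (~ W (FL a)) by (intro H9; pose proof (W_da _ H9); unfold D, FL in *; lra).
    assert (M2 (FL a)) by (unfold M2; rewrite GF; apply R1refl).
    unfold tau. destruct (excluded_middle_informative (W (FL a))); [tauto|].
    destruct (excluded_middle_informative (M2 (FL a))); [|tauto]. apply GF. }
  assert (h_it : forall n x, h (Nat.iter n g x) = Nat.iter n f (h x)).
  { induction n as [|n IH]; intro x; simpl; auto. rewrite Hcomm, IH. reflexivity. }
  exists (h a). split.
  - pose proof (h_it L a) as E. rewrite g_per in E. unfold FL. congruence.
  - intros i Hi. rewrite <- h_it, g_orb by auto. rewrite metric_sym; auto.
    specialize (Hh (Nat.iter i f a)). lra.
Qed.


Lemma ts_spsp {X} (d : X -> X -> R) (f finv : X -> X) :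
  cantor_space d -> is_homeo d f finv -> equicontinuous d f finv ->
  topologically_stable d f finv -> strict_periodic_shadowing d f.
Proof.
  intros [Hm [Hc [Hni Htd]]] Hh Heq HT eps He.
  set (eta := eps/4).
  destruct (HT eta ltac:(unfold eta; lra)) as [dT [HdT HTd]].
  destruct (Heq (dT/2) ltac:(lra)) as [de [Hde Hdel]].
  set (e0 := Rmin (dT/2) (Rmin de (eps/4))).
  assert (He0 : 0 < e0) by (repeat apply Rmin_pos; lra).
  assert (He0a : e0 <= dT/2) by apply Rmin_l.
  assert (He0b : e0 <= de) by (eapply Rle_trans; [apply Rmin_r|apply Rmin_l]).
  assert (He0c : e0 <= eps/4) by (eapply Rle_trans; [apply Rmin_r|apply Rmin_r]).
  destruct (mkpart d f finv Hm Hc Htd Heq e0 He0) as [dl [Rl P]].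
  pose proof (p_refl _ _ _ _ _ P) as Rrefl. pose proof (p_sym _ _ _ _ _ P) as Rsym.
  pose proof (p_trans _ _ _ _ _ P) as Rtrans. pose proof (p_small _ _ _ _ _ P) as Rsmall.
  pose proof (p_close _ _ _ _ _ P) as Rclose. pose proof (R_iter _ _ _ _ _ P) as Riter.
  pose proof (ts_Q d f finv Hm Hc Htd Hh Heq eta dT ltac:(unfold eta; lra) HTd de Hdel e0 dl Rl P He0b ltac:(lra)) as Q.
  exists dl. split; [exact (p_delta _ _ _ _ _ P)|].
  intros m xs Hm1 Hstep Hcl.
  set (a := xs 0%nat).
  assert (Rx : forall i, (i <= m)%nat -> Rl (xs i) (Nat.iter i f a)).
  { induction i as [|i IH]; intro Hi; [apply Rrefl|].
    eapply Rtrans. apply Rsym, Rclose, Hstep. lia. simpl. apply (p_f _ _ _ _ _ P), IH. lia. }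
  assert (Hma : Rl (Nat.iter m f a) a).
  { apply Rsym. pose proof (Rx m ltac:(lia)) as H. rewrite <- Hcl in H. exact H. }
  destruct (min_exists (fun n => (1 <= n)%nat /\ Rl (Nat.iter n f a) a)) as [L [[HL1 HL2] HL3]].
  { exists m; auto. }
  assert (Hmin : forall k, (1 <= k)%nat -> (k < L)%nat -> ~ Rl (Nat.iter k f a) a).
  { intros k H1 H2 H3. apply (HL3 k H2); auto. }
  assert (Hred : forall k, Rl (Nat.iter k f a) (Nat.iter (k mod L) f a)).
  { intro k. replace (Nat.iter k f a) with (Nat.iter (k / L * L + k mod L) f a).
    apply (R_mult _ _ _ _ _ P); auto. f_equal. rewrite Nat.mul_comm. symmetry. apply Nat.div_mod. lia. }
  assert (Hdiv : (m mod L = 0)%nat).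
  { destruct (Nat.eq_dec (m mod L) 0) as [E|E]; auto. exfalso.
    apply (Hmin (m mod L)). lia. apply Nat.mod_upper_bound; lia.
    eapply Rtrans; [apply Rsym, Hred|exact Hma]. }
  destruct (Q a L HL1 HL2 Hmin) as [p [Hp1 Hp2]].
  assert (Hpr : forall k, Nat.iter k f p = Nat.iter (k mod L) f p).
  { intro k. replace (Nat.iter k f p) with (Nat.iter (k / L * L + k mod L) f p).
    apply iter_period; auto. f_equal. pose proof (Nat.div_mod k L ltac:(lia)). nia. }
  exists p. split.
  - rewrite Hpr, Hdiv. reflexivity.
  - intros i Hi. rewrite Hpr.
    assert (Hr : (i mod L < L)%nat) by (apply Nat.mod_upper_bound; lia).
    pose proof (Hp2 _ Hr). pose proof (Rsmall _ _ (Rx i Hi)). pose proof (Rsmall _ _ (Hred i)).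
    pose proof (metric_triangle d Hm (xs i) (Nat.iter i f a) (Nat.iter (i mod L) f p)).
    pose proof (metric_triangle d Hm (Nat.iter i f a) (Nat.iter (i mod L) f a) (Nat.iter (i mod L) f p)).
    unfold eta in *. lra.
Qed.

Theorem corollary1p2 (X : Type) (d : X -> X -> R) (f finv : X -> X) :
  cantor_space d ->
  is_homeo d f finv ->
  equicontinuous d f finv ->
  (topologically_stable d f finv <-> strict_periodic_shadowing d f).
Proof.
  intros Hcs Hh Heq. split.
  - apply ts_spsp; auto.
  - apply spsp_ts; auto.
Qed.
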